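(* Let \(a,b,c\) be positive integers and let \(m\) be a positive integer that is not a perfect square. Then \((a\sqrt m,\,b+c\sqrt m)\) spans \(1\) in \(\mathbb Z[\sqrt m]\) if and only if \((am,\,b^2-c^2m)\) spans \(1\) in \(\mathbb Z\), i.e. \(\gcd(am,b^2-c^2m)=1\).
   Context: \(\mathbb Z[\sqrt m]=\{u+v\sqrt m\mid u,v\in\mathbb Z\}\). For a commutative ring \(R\) with \(1\), a pair \((\alpha_1,\alpha_2)\) spans \(1\) in \(R\) if \(\lambda_1\alpha_1+\lambda_2\alpha_2=1\) for some \(\lambda_1,\lambda_2\in R\). *)

(* Defs.v *)
From Stdlib Require Import ZArith.
Open Scope Z_scope.

(* Z[sqrt m] = { u + v sqrt m | u v : Z }, element u + v sqrt m represented as (u, v). *)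
Record Zsqrt := mkZs { re : Z ; ir : Z }.

Definition zs_add (x y : Zsqrt) : Zsqrt := mkZs (re x + re y) (ir x + ir y).
Definition zs_mul (m : Z) (x y : Zsqrt) : Zsqrt :=
  mkZs (re x * re y + ir x * ir y * m) (re x * ir y + ir x * re y).
Definition zs_one : Zsqrt := mkZs 1 0.

Definition spans1_Zsqrt (m : Z) (al1 al2 : Zsqrt) : Prop :=
  exists l1 l2 : Zsqrt, zs_add (zs_mul m l1 al1) (zs_mul m l2 al2) = zs_one.

Definition spans1_Z (x y : Z) : Prop :=
  exists l1 l2 : Z, l1 * x + l2 * y = 1.

Definition is_square (m : Z) : Prop := exists k : Z, k * k = m.

(* Main.v *)
Require Import Defs.
From Stdlib Require Import ZArith Lia.
Open Scope Z_scope.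

Theorem lemma7 (a b c m : Z) (ha : 0 < a) (hb : 0 < b) (hc : 0 < c)
  (hm : 0 < m) (hsq : ~ is_square m) :
  (spans1_Zsqrt m (mkZs 0 a) (mkZs b c) <-> spans1_Z (a * m) (b ^ 2 - c ^ 2 * m))
  /\ (spans1_Z (a * m) (b ^ 2 - c ^ 2 * m) <-> Z.gcd (a * m) (b ^ 2 - c ^ 2 * m) = 1).
Proof.
  split; split.
  - intros [[p q] [[r s] H]].
    unfold zs_add, zs_mul, zs_one in H; simpl in H.
    injection H as H1 H2.
    exists (2*q - q*q*a*m + p*p*a), (r*r - s*s*m).
    assert (E1 : r*b + s*c*m = 1 - q*a*m) by lia.
    assert (E2 : r*c + s*b = - (p*a)) by lia.
    assert (Id : (r*r - s*s*m) * (b^2 - c^2*m)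
                 = (r*b + s*c*m)*(r*b + s*c*m) - m*((r*c + s*b)*(r*c + s*b))) by ring.
    rewrite E1, E2 in Id.
    rewrite Id.
    ring.
  - intros [x [y H]].
    exists (mkZs 0 x), (mkZs (y*b) (-(y*c))).
    unfold zs_add, zs_mul, zs_one; simpl. f_equal.
    + rewrite <- H. ring.
    + ring.
  - intros [x [y H]]. apply (Z.bezout_1_gcd _ _). exists x, y. exact H.
  - intros H. destruct (Z.gcd_bezout (a*m) (b^2 - c^2*m) _ eq_refl) as [u [v Huv]].
    exists u, v. rewrite Huv. exact H.
Qed.
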